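(* Let $\lambda\in(1,\infty)\setminus\mathbb{N}$ and let $\phi$ be one of the functions $\phi(x)=1$, $1-x$, $1-x^2$, $(1-x^2)^2$, $(1-x^3)^3$, $(1-x^2)^3$, or $e^{-\xi x}$ with $\xi>0$. Then the scheme $S_{1,\mathbf{w}^\lambda}$ preserves monotonicity: for every bounded non-decreasing initial sequence $\mathbf{f}^0$, the limit function $S^\infty_{1,\mathbf{w}^\lambda}\mathbf{f}^0$ is non-decreasing.
   Context: Put $w^\lambda_m=\phi(|m|/\lambda)$ for $m\in\mathbb{Z}$, $|m|<\lambda$, and $M_i=\{m\in\mathbb{Z}: m\equiv i \pmod 2,\ |m|<\lambda\}$, $i\in\{0,1\}$. The scheme $S_{1,\mathbf{w}^\lambda}$ (weighted local polynomial regression scheme of degree 1, coinciding with degree 0) is \[ (S_{1,\mathbf{w}^\lambda}\mathbf{f})_{2j+i}=\frac{\sum_{m\in M_i} w^\lambda_m f_{j+(m+i)/2}}{\sum_{m\in M_i} w^\lambda_m},\qquad i\in\{0,1\},\ j\in\mathbb{Z}. \] It is uniformly convergent; $S^\infty\mathbf{f}^0$ denotes the continuous limit $F$ with $\lim_{k\to\infty}\sup_j|(S^k\mathbf{f}^0)_j-F(2^{-k}j)|=0$. *)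

(* Defs.v *)
From Stdlib Require Import Reals Lra Lia ZArith List.
Open Scope R_scope.

Definition weight (phi : R -> R) (lam : R) (m : Z) : R :=
  phi (Rabs (IZR m) / lam).

(* Candidate integers -N..N with N = |up lam| > lam, so every |m| < lam is listed. *)
Definition candidates (lam : R) : list Z :=
  let N := Z.of_nat (Z.abs_nat (up lam)) in
  map (fun k => (Z.of_nat k - N)%Z) (seq 0 (2 * Z.abs_nat (up lam) + 1)).

Definition Mset (lam : R) (i : Z) : list Z :=
  filter (fun m => (Z.eqb (Z.modulo m 2) i &&
                    (if Rlt_dec (Rabs (IZR m)) lam then true else false))%bool)
         (candidates lam).

Definition sumZ (l : list Z) (g : Z -> R) : R :=
  fold_right (fun m acc => g m + acc) 0 l.

Definition S1w (phi : R -> R) (lam : R) (f : Z -> R) (n : Z) : R :=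
  let j := Z.div n 2 in
  let i := Z.modulo n 2 in
  sumZ (Mset lam i) (fun m => weight phi lam m * f (j + Z.div (m + i) 2)%Z)
  / sumZ (Mset lam i) (weight phi lam).

Definition S1w_iter (phi : R -> R) (lam : R) (k : nat) (f : Z -> R) : Z -> R :=
  Nat.iter k (S1w phi lam) f.

Definition is_limit_function (phi : R -> R) (lam : R) (f : Z -> R) (F : R -> R) : Prop :=
  (forall x, continuity_pt F x) /\
  forall eps, 0 < eps -> exists K : nat, forall k : nat, (K <= k)%nat ->
    forall j : Z, Rabs (S1w_iter phi lam k f j - F (IZR j / 2 ^ k)) <= eps.

Definition admissible_phi (phi : R -> R) : Prop :=
  (forall x, phi x = 1) \/
  (forall x, phi x = 1 - x) \/
  (forall x, phi x = 1 - x ^ 2) \/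
  (forall x, phi x = (1 - x ^ 2) ^ 2) \/
  (forall x, phi x = (1 - x ^ 3) ^ 3) \/
  (forall x, phi x = (1 - x ^ 2) ^ 3) \/
  (exists xi, 0 < xi /\ forall x, phi x = exp (- xi * x)).

(* Main.v *)
Require Import Defs.
From Stdlib Require Import Reals ZArith Lra Lia Psatz List Permutation.
Open Scope R_scope.

Lemma c1 x y d : 0 < d -> y + d <= x - d -> 0 <= y -> ((x - d) ^ 3 + (y + d) ^ 3 <= x ^ 3 + y ^ 3).
intros. assert (0 <= d * (x-d-y) * (x-d+y)) by (apply Rmult_le_pos; [apply Rmult_le_pos|];lra).
assert (0 <= d*d * (x-d-y)) by (apply Rmult_le_pos; [apply Rmult_le_pos|];lra). nra. Qed.
Lemma c2 x y d : 0 < d -> y + d <= x - d -> y <= 0 -> 0 <= y+d -> ((x - d) ^ 3 + (y + d) ^ 3 <= x ^ 3 + (-y) ^ 3).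
intros. assert ((y+d)^3 <= d^3) by (apply pow_incr; lra).
assert (0 <= (x-d)*(x-d)*d) by (apply Rmult_le_pos; [apply Rmult_le_pos|];nra). 
assert (0 <= (x-d)*d*d) by (apply Rmult_le_pos; [apply Rmult_le_pos|];nra). 
assert (0 <= (-y)^3) by (apply pow_le; lra).
nra. Qed.
Lemma c3 x y d : 0 < d -> y + d <= x - d -> y+d < 0 -> 0 <= x-d -> ((x - d) ^ 3 + (-(y + d)) ^ 3 <= x ^ 3 + (-y) ^ 3).
intros. assert ((x-d)^3 <= x^3) by (apply pow_incr; lra).
assert ((-(y+d))^3 <= (-y)^3) by (apply pow_incr; lra). lra. Qed.
Lemma conv3 x y d : 0 < d -> y + d <= x - d ->
  Rabs (x-d)^3 + Rabs (y+d)^3 <= Rabs x ^3 + Rabs y ^3.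
Proof.
  intros Hd H.
  destruct (Rle_lt_dec 0 y); destruct (Rle_lt_dec 0 (y+d)); destruct (Rle_lt_dec 0 (x-d)); destruct (Rle_lt_dec 0 x);
  repeat first [rewrite (Rabs_right x) by lra | rewrite (Rabs_left x) by lra
   | rewrite (Rabs_right y) by lra | rewrite (Rabs_left y) by lra
   | rewrite (Rabs_right (x-d)) by lra | rewrite (Rabs_left (x-d)) by lra
   | rewrite (Rabs_right (y+d)) by lra | rewrite (Rabs_left (y+d)) by lra]; try lra.
  - apply c1; lra.
  - apply c2; lra.
  - apply c3; lra.
  - assert (H0 := c2 (-y) (-x) d ltac:(lra) ltac:(lra) ltac:(lra) ltac:(lra)).
    replace (- (x - d)) with (-x+d) by ring. replace (-(y+d)) with (-y-d) by ring.
    replace (- - x) with x in H0 by ring. lra.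
  - assert (H0 := c1 (-y) (-x) d ltac:(lra) ltac:(lra) ltac:(lra)).
    replace (- (x - d)) with (-x+d) by ring. replace (-(y+d)) with (-y-d) by ring. lra.
Qed.

Lemma conv1 x y d : 0 < d -> y + d <= x - d -> Rabs (x-d)^1 + Rabs (y+d)^1 <= Rabs x ^1 + Rabs y ^1.
Proof. intros. rewrite !pow_1. unfold Rabs; repeat destruct Rcase_abs; lra. Qed.
Lemma conv2 x y d : 0 < d -> y + d <= x - d -> Rabs (x-d)^2 + Rabs (y+d)^2 <= Rabs x ^2 + Rabs y ^2.
Proof. intros. rewrite !pow2_abs. nra. Qed.

Lemma prod_le A B P Q : 0 <= B <= A -> B <= P -> B <= Q -> A + B <= P + Q -> A*B <= P*Q.
Proof. intros. nra. Qed.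

Lemma core r x y d : 0 < d -> y + d <= x - d -> Rabs x < 1 -> Rabs y < 1 ->
  Rabs (x-d)^r + Rabs (y+d)^r <= Rabs x ^r + Rabs y ^r ->
  0 <= 1 - Rabs x ^ r /\ 0 <= 1 - Rabs y ^ r /\
  (1 - Rabs x ^ r) * (1 - Rabs y ^ r) <= (1 - Rabs (x-d) ^ r) * (1 - Rabs (y+d) ^ r).
Proof.
  intros Hd H Hx Hy Hc.
  assert (Px: Rabs x ^ r <= 1) by (rewrite <- (pow1 r); apply pow_incr; split; [apply Rabs_pos|lra]).
  assert (Py: Rabs y ^ r <= 1) by (rewrite <- (pow1 r); apply pow_incr; split; [apply Rabs_pos|lra]).
  split; [lra|split;[lra|]].
  destruct (Rle_dec (Rabs x) (Rabs y)) as [Hxy|Hxy].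
  - assert (H1: Rabs (x-d) <= Rabs y /\ Rabs (y+d) <= Rabs y)
      by (clear Hc Px Py; unfold Rabs in *; repeat destruct Rcase_abs; split; lra).
    destruct H1 as [H1 H2].
    assert (Rabs (x-d)^r <= Rabs y^r) by (apply pow_incr; split; [apply Rabs_pos|lra]).
    assert (Rabs (y+d)^r <= Rabs y^r) by (apply pow_incr; split; [apply Rabs_pos|lra]).
    assert (Rabs x^r <= Rabs y^r) by (apply pow_incr; split; [apply Rabs_pos|lra]).
    apply prod_le; lra.
  - assert (H1: Rabs (x-d) <= Rabs x /\ Rabs (y+d) <= Rabs x)
      by (clear Hc Px Py; unfold Rabs in *; repeat destruct Rcase_abs; split; lra).
    destruct H1 as [H1 H2].
    assert (Rabs (x-d)^r <= Rabs x^r) by (apply pow_incr; split; [apply Rabs_pos|lra]).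
    assert (Rabs (y+d)^r <= Rabs x^r) by (apply pow_incr; split; [apply Rabs_pos|lra]).
    assert (Rabs y^r <= Rabs x^r) by (apply pow_incr; split; [apply Rabs_pos|lra]).
    rewrite (Rmult_comm (1 - Rabs x ^ r)), (Rmult_comm (1 - Rabs (x-d)^r)).
    apply prod_le; lra.
Qed.

Lemma corek r k x y d : 0 < d -> y + d <= x - d -> Rabs x < 1 -> Rabs y < 1 ->
  Rabs (x-d)^r + Rabs (y+d)^r <= Rabs x ^r + Rabs y ^r ->
  (1 - Rabs x ^ r)^k * (1 - Rabs y ^ r)^k <= (1 - Rabs (x-d) ^ r)^k * (1 - Rabs (y+d) ^ r)^k.
Proof.
  intros. destruct (core r x y d) as [A [B C]]; auto.
  rewrite <- !Rpow_mult_distr. apply pow_incr. split; [apply Rmult_le_pos|]; assumption.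
Qed.

Lemma LC_phi phi : admissible_phi phi -> forall x y d, 0 < d -> y + d <= x - d -> Rabs x < 1 -> Rabs y < 1 ->
  phi (Rabs x) * phi (Rabs y) <= phi (Rabs (x-d)) * phi (Rabs (y+d)).
Proof.
  intros Hp x y d Hd H Hx Hy.
  pose proof (conv1 x y d Hd H). pose proof (conv2 x y d Hd H). pose proof (conv3 x y d Hd H).
  destruct Hp as [E|[E|[E|[E|[E|[E|[xi [Hxi E]]]]]]]]; rewrite !E.
  - lra.
  - pose proof (corek 1 1 x y d Hd H Hx Hy H0). rewrite !pow_1 in H3. exact H3.
  - pose proof (corek 2 1 x y d Hd H Hx Hy H1). rewrite !pow_1 in H3. exact H3.
  - exact (corek 2 2 x y d Hd H Hx Hy H1).
  - exact (corek 3 3 x y d Hd H Hx Hy H2).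
  - exact (corek 2 3 x y d Hd H Hx Hy H1).
  - rewrite <- !exp_plus. rewrite !pow_1 in H0.
    assert (- xi * Rabs x + - xi * Rabs y <= - xi * Rabs (x - d) + - xi * Rabs (y + d)) by nra.
    destruct (Rle_lt_or_eq_dec _ _ H3) as [Hl|He]; [left; apply exp_increasing; exact Hl| rewrite He; right; reflexivity].
Qed.

Lemma pos_phi phi : admissible_phi phi -> forall u, 0 <= u < 1 -> 0 < phi u.
Proof.
  intros Hp u Hu.
  destruct Hp as [E|[E|[E|[E|[E|[E|[xi [Hxi E]]]]]]]]; rewrite !E.
  - lra.
  - lra.
  - nra.
  - apply pow_lt; nra.
  - apply pow_lt. assert (u^3 < 1). { simpl. nra. } lra.
  - apply pow_lt; nra.
  - apply exp_pos.
Qed.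

Definition wh (phi : R -> R) (lam : R) (m : Z) : R :=
  if Rlt_dec (Rabs (IZR m)) lam then weight phi lam m else 0.

Lemma abs_div_lam lam z : 0 < lam -> Rabs z / lam = Rabs (z / lam).
Proof. intros. unfold Rdiv. rewrite Rabs_mult, Rabs_inv, (Rabs_right lam) by lra. reflexivity. Qed.

Lemma lt_div_1 a lam : 0 < lam -> a < lam -> a / lam < 1.
Proof. intros. apply (Rmult_lt_reg_r lam); auto. unfold Rdiv. rewrite Rmult_assoc, Rinv_l by lra. lra. Qed.

Lemma wh_nonneg phi lam m : 1 < lam -> admissible_phi phi -> 0 <= wh phi lam m.
Proof.
  intros Hl Hp. unfold wh, weight. destruct Rlt_dec; [|lra].
  left. apply (pos_phi phi Hp). split.
  - unfold Rdiv. apply Rmult_le_pos; [apply Rabs_pos| left; apply Rinv_0_lt_compat; lra].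
  - apply lt_div_1; lra.
Qed.

Lemma wh_pos phi lam m : 1 < lam -> admissible_phi phi -> Rabs (IZR m) < lam -> 0 < wh phi lam m.
Proof.
  intros Hl Hp H. unfold wh, weight. destruct Rlt_dec; [|contradiction].
  apply (pos_phi phi Hp). split.
  - unfold Rdiv. apply Rmult_le_pos; [apply Rabs_pos| left; apply Rinv_0_lt_compat; lra].
  - apply lt_div_1; lra.
Qed.

Lemma wh_LC phi lam a b : 1 < lam -> admissible_phi phi -> (b + 1 <= a - 1)%Z ->
  wh phi lam a * wh phi lam b <= wh phi lam (a-1) * wh phi lam (b+1).
Proof.
  intros Hl Hp Hab.
  assert (N1 := wh_nonneg phi lam (a-1) Hl Hp). assert (N2 := wh_nonneg phi lam (b+1) Hl Hp).
  assert (IZR b + 1 <= IZR a - 1) by (rewrite <- plus_IZR, <- minus_IZR; apply IZR_le; lia).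
  unfold wh at 1 2. destruct (Rlt_dec (Rabs (IZR a)) lam) as [Ha|Ha]; [|rewrite Rmult_0_l; apply Rmult_le_pos; auto].
  destruct (Rlt_dec (Rabs (IZR b)) lam) as [Hb|Hb]; [|rewrite Rmult_0_r; apply Rmult_le_pos; auto].
  unfold wh. rewrite minus_IZR, plus_IZR.
  destruct (Rlt_dec (Rabs (IZR a - 1)) lam) as [Ha'|Ha'];
    [| exfalso; apply Ha'; unfold Rabs in *; repeat destruct Rcase_abs; lra].
  destruct (Rlt_dec (Rabs (IZR b + 1)) lam) as [Hb'|Hb'];
    [| exfalso; apply Hb'; unfold Rabs in *; repeat destruct Rcase_abs; lra].
  unfold weight. rewrite !minus_IZR, !plus_IZR, !abs_div_lam by lra.
  replace ((IZR a - 1) / lam) with (IZR a / lam - 1/lam) by (field; lra).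
  replace ((IZR b + 1) / lam) with (IZR b / lam + 1/lam) by (field; lra).
  apply (LC_phi phi Hp).
  - unfold Rdiv; rewrite Rmult_1_l; apply Rinv_0_lt_compat; lra.
  - replace (IZR b / lam + 1 / lam) with ((IZR b + 1) * / lam) by (field; lra).
    replace (IZR a / lam - 1 / lam) with ((IZR a - 1) * / lam) by (field; lra).
    apply Rmult_le_compat_r; [left; apply Rinv_0_lt_compat; lra| lra].
  - rewrite <- abs_div_lam by lra. apply lt_div_1; lra.
  - rewrite <- abs_div_lam by lra. apply lt_div_1; lra.
Qed.

Lemma sumZ_ext l g h : (forall x, In x l -> g x = h x) -> sumZ l g = sumZ l h.
Proof. induction l; simpl; intros; [reflexivity|]. rewrite H by auto. rewrite IHl by auto. reflexivity. Qed.
Lemma sumZ_le l g h : (forall x, In x l -> g x <= h x) -> sumZ l g <= sumZ l h.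
Proof. induction l; simpl; intros; [lra|]. pose proof (H a (or_introl eq_refl)). assert (sumZ l g <= sumZ l h) by auto. lra. Qed.
Lemma sumZ_zero l : sumZ l (fun _ => 0) = 0.
Proof. induction l; simpl; [reflexivity|]. rewrite IHl; ring. Qed.
Lemma sumZ_nonneg l g : (forall x, In x l -> 0 <= g x) -> 0 <= sumZ l g.
Proof. intros. rewrite <- (sumZ_zero l). apply sumZ_le; auto. Qed.
Lemma sumZ_in l g x : In x l -> (forall y, In y l -> 0 <= g y) -> g x <= sumZ l g.
Proof.
  induction l; simpl; intros H H0; [contradiction|]. destruct H as [H|H].
  - subst. assert (0 <= sumZ l g) by (apply sumZ_nonneg; auto). lra.
  - assert (g x <= sumZ l g) by auto. pose proof (H0 a (or_introl eq_refl)). lra.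
Qed.
Lemma sumZ_map l h g : sumZ (map h l) g = sumZ l (fun t => g (h t)).
Proof. induction l; simpl; [reflexivity|]. rewrite IHl; reflexivity. Qed.
Lemma sumZ_lin4 l a b c d g1 g2 g3 g4 :
  sumZ l (fun x => a*g1 x - b*g2 x - c*g3 x + d*g4 x) = a*sumZ l g1 - b * sumZ l g2 - c*sumZ l g3 + d*sumZ l g4.
Proof. induction l; simpl; [ring|]. rewrite IHl; ring. Qed.
Lemma sumZ_lin4' l a b c d g1 g2 g3 g4 :
  sumZ l (fun x => g1 x*a - g2 x*b - g3 x*c + g4 x*d) = sumZ l g1*a - sumZ l g2*b - sumZ l g3*c + sumZ l g4*d.
Proof. induction l; simpl; [ring|]. rewrite IHl; ring. Qed.
Lemma sumZ_perm l1 l2 g : Permutation l1 l2 -> sumZ l1 g = sumZ l2 g.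
Proof. induction 1; simpl; try lra. Qed.
Lemma sumZ_filter l g p : sumZ (filter p l) g = sumZ l (fun x => if p x then g x else 0).
Proof. induction l; simpl; [reflexivity|]. destruct (p a); simpl; rewrite IHl; ring. Qed.
Lemma sumZ_support l1 l2 g : NoDup l1 -> NoDup l2 ->
  (forall x, g x <> 0 -> (In x l1 <-> In x l2)) -> sumZ l1 g = sumZ l2 g.
Proof.
  intros H1 H2 H. set (p := fun x => if Req_dec_T (g x) 0 then false else true).
  assert (E: forall l, sumZ l g = sumZ (filter p l) g).
  { intro l. rewrite sumZ_filter. apply sumZ_ext. intros x _. unfold p. destruct Req_dec_T; auto. }
  rewrite (E l1), (E l2). apply sumZ_perm. apply NoDup_Permutation; try apply NoDup_filter; auto.
  intro x. rewrite !filter_In. unfold p. destruct Req_dec_T; [split; intros [_ F]; discriminate|].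
  specialize (H x n). tauto.
Qed.

Lemma GC (l : list Z) (rho sig f : Z -> R) :
  (forall t t', (t' < t)%Z -> rho t * sig t' <= sig t * rho t') ->
  (forall t t', (t' <= t)%Z -> f t' <= f t) ->
  sumZ l (fun t => rho t * f t) * sumZ l sig <= sumZ l (fun t => sig t * f t) * sumZ l rho.
Proof.
  intros H Hf.
  assert (D: sumZ l (fun t => sumZ l (fun t' => (f t - f t') * (rho t * sig t' - sig t * rho t'))) <= 0).
  { rewrite <- (sumZ_zero l). apply sumZ_le. intros t _.
    rewrite <- (sumZ_zero l). apply sumZ_le. intros t' _.
    destruct (Z_lt_le_dec t' t) as [Hlt|Hle].
    - specialize (H t t' Hlt). specialize (Hf t t' (Z.lt_le_incl _ _ Hlt)). nra.
    - destruct (Z.eq_dec t t') as [->|Hne]; [nra|].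
      assert (Hlt: (t < t')%Z) by lia.
      specialize (H t' t Hlt). specialize (Hf t' t Hle). nra. }
  rewrite (sumZ_ext _ _ (fun t => (rho t * f t) * sumZ l sig - (sig t * f t) * sumZ l rho
      - rho t * sumZ l (fun t => sig t * f t) + sig t * sumZ l (fun t => rho t * f t))) in D.
  - rewrite sumZ_lin4' in D. lra.
  - intros t _.
    rewrite (sumZ_ext _ _ (fun t' => (f t * rho t) * sig t' - (f t * sig t) * rho t'
       - rho t * (sig t' * f t') + sig t * (rho t' * f t'))).
    + rewrite sumZ_lin4. ring.
    + intros; ring.
Qed.

Ltac zl := Z.div_mod_to_equations; lia.

Definition NN (lam : R) : Z := Z.of_nat (Z.abs_nat (up lam)).

Lemma in_cand lam x : In x (candidates lam) <-> (- NN lam <= x <= NN lam)%Z.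
Proof.
  unfold candidates, NN. remember (Z.abs_nat (up lam)) as M. clear HeqM.
  rewrite in_map_iff. split.
  - intros [k [E I]]. apply in_seq in I. lia.
  - intros H. exists (Z.to_nat (x + Z.of_nat M)). split; [lia|]. apply in_seq. lia.
Qed.

Lemma NoDup_cand lam : NoDup (candidates lam).
Proof. unfold candidates. apply FinFun.Injective_map_NoDup; [intros a b E; lia| apply seq_NoDup]. Qed.

Lemma NN_facts lam : 1 < lam -> (2 <= NN lam)%Z /\ forall m, Rabs (IZR m) < lam -> (Z.abs m < NN lam)%Z.
Proof.
  intros Hl. destruct (archimed lam) as [A B].
  assert (H1: (1 < up lam)%Z) by (apply lt_IZR; lra).
  assert (E: NN lam = up lam) by (unfold NN; rewrite Nat2Z.inj_abs_nat; lia).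
  rewrite E. split; [lia|]. intros m Hm. apply lt_IZR. rewrite abs_IZR. lra.
Qed.

Lemma Mset_in lam i m : In m (Mset lam i) <-> In m (candidates lam) /\ (m mod 2 = i)%Z /\ Rabs (IZR m) < lam.
Proof.
  unfold Mset. rewrite filter_In. destruct Rlt_dec as [r|r].
  - rewrite Bool.andb_true_r, Z.eqb_eq. tauto.
  - rewrite Bool.andb_false_r. split; [intros [_ F]; discriminate| tauto].
Qed.

Lemma row_sum phi lam i h g : 1 < lam ->
  NoDup (map h (candidates lam)) ->
  (forall m, Rabs (IZR m) < lam -> (In m (map h (candidates lam)) <-> (m mod 2 = i)%Z)) ->
  sumZ (Mset lam i) (fun m => weight phi lam m * g m) =
  sumZ (candidates lam) (fun t => wh phi lam (h t) * g (h t)).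
Proof.
  intros Hl Hnd Hm. rewrite <- (sumZ_map _ h (fun m => wh phi lam m * g m)).
  rewrite (sumZ_ext (Mset lam i) _ (fun m => wh phi lam m * g m)).
  2:{ intros x Hx. apply Mset_in in Hx. unfold wh. destruct Rlt_dec; [reflexivity| tauto]. }
  apply sumZ_support; auto. { apply NoDup_filter, NoDup_cand. }
  intros x Hx. assert (Hx' : Rabs (IZR x) < lam).
  { unfold wh in Hx. destruct Rlt_dec; [assumption| exfalso; apply Hx; ring]. }
  rewrite Mset_in, Hm by assumption. destruct (NN_facts lam Hl) as [_ HN]. specialize (HN x Hx').
  rewrite in_cand. intuition lia.
Qed.

Lemma mem_h0 lam m : 1 < lam -> Rabs (IZR m) < lam ->
  (In m (map (fun t => 2*t)%Z (candidates lam)) <-> (m mod 2 = 0)%Z).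
Proof.
  intros Hl Hm. destruct (NN_facts lam Hl) as [H2 HN]. specialize (HN m Hm).
  rewrite in_map_iff. split.
  - intros [t [E _]]. cbv beta in E. subst. zl.
  - intros E. exists (m / 2)%Z. rewrite in_cand. cbv beta. zl.
Qed.
Lemma mem_h1 lam m : 1 < lam -> Rabs (IZR m) < lam ->
  (In m (map (fun t => 2*t-1)%Z (candidates lam)) <-> (m mod 2 = 1)%Z).
Proof.
  intros Hl Hm. destruct (NN_facts lam Hl) as [H2 HN]. specialize (HN m Hm).
  rewrite in_map_iff. split.
  - intros [t [E _]]. cbv beta in E. subst. zl.
  - intros E. exists ((m+1) / 2)%Z. rewrite in_cand. cbv beta. zl.
Qed.
Lemma mem_h2 lam m : 1 < lam -> Rabs (IZR m) < lam ->
  (In m (map (fun t => 2*t-2)%Z (candidates lam)) <-> (m mod 2 = 0)%Z).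
Proof.
  intros Hl Hm. destruct (NN_facts lam Hl) as [H2 HN]. specialize (HN m Hm).
  rewrite in_map_iff. split.
  - intros [t [E _]]. cbv beta in E. subst. zl.
  - intros E. exists (m / 2 + 1)%Z. rewrite in_cand. cbv beta. zl.
Qed.

Lemma nd_h lam (h : Z -> Z) : (forall a b, h a = h b -> a = b) -> NoDup (map h (candidates lam)).
Proof. intros. apply FinFun.Injective_map_NoDup; [exact H| apply NoDup_cand]. Qed.

Lemma S_even phi lam f j : 1 < lam ->
  S1w phi lam f (2*j) = sumZ (candidates lam) (fun t => wh phi lam (2*t) * f (j+t)%Z)
     / sumZ (candidates lam) (fun t => wh phi lam (2*t)).
Proof.
  intros Hl. unfold S1w.
  replace ((2*j) / 2)%Z with j by zl. replace ((2*j) mod 2)%Z with 0%Z by zl.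
  rewrite (sumZ_ext (Mset lam 0) (weight phi lam) (fun m => weight phi lam m * (fun _ => 1) m)) by (intros; simpl; ring).
  assert (ND: NoDup (map (fun t => 2*t)%Z (candidates lam))) by (apply nd_h; intros; lia).
  assert (MM := fun m Hm => mem_h0 lam m Hl Hm).
  rewrite !(row_sum phi lam 0 (fun t => 2*t)%Z _ Hl ND MM).
  f_equal; apply sumZ_ext; intros t _.
  - do 2 f_equal. zl.
  - ring.
Qed.

Lemma S_odd phi lam f j : 1 < lam ->
  S1w phi lam f (2*j+1) = sumZ (candidates lam) (fun t => wh phi lam (2*t-1) * f (j+t)%Z)
     / sumZ (candidates lam) (fun t => wh phi lam (2*t-1)).
Proof.
  intros Hl. unfold S1w.
  replace ((2*j+1) / 2)%Z with j by zl. replace ((2*j+1) mod 2)%Z with 1%Z by zl.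
  rewrite (sumZ_ext (Mset lam 1) (weight phi lam) (fun m => weight phi lam m * (fun _ => 1) m)) by (intros; simpl; ring).
  assert (ND: NoDup (map (fun t => 2*t-1)%Z (candidates lam))) by (apply nd_h; intros; lia).
  assert (MM := fun m Hm => mem_h1 lam m Hl Hm).
  rewrite !(row_sum phi lam 1 (fun t => 2*t-1)%Z _ Hl ND MM).
  f_equal; apply sumZ_ext; intros t _.
  - do 2 f_equal. zl.
  - ring.
Qed.

Lemma S_even2 phi lam f j : 1 < lam ->
  S1w phi lam f (2*j+2) = sumZ (candidates lam) (fun t => wh phi lam (2*t-2) * f (j+t)%Z)
     / sumZ (candidates lam) (fun t => wh phi lam (2*t-2)).
Proof.
  intros Hl. unfold S1w.
  replace ((2*j+2) / 2)%Z with (j+1)%Z by zl. replace ((2*j+2) mod 2)%Z with 0%Z by zl.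
  rewrite (sumZ_ext (Mset lam 0) (weight phi lam) (fun m => weight phi lam m * (fun _ => 1) m)) by (intros; simpl; ring).
  assert (ND: NoDup (map (fun t => 2*t-2)%Z (candidates lam))) by (apply nd_h; intros; lia).
  assert (MM := fun m Hm => mem_h2 lam m Hl Hm).
  rewrite !(row_sum phi lam 0 (fun t => 2*t-2)%Z _ Hl ND MM).
  f_equal; apply sumZ_ext; intros t _.
  - do 2 f_equal. zl.
  - ring.
Qed.

Lemma div_cmp a b c d : 0 < b -> 0 < d -> a * d <= c * b -> a / b <= c / d.
Proof.
  intros Hb Hd H.
  replace (a/b) with ((a*d) * / (b*d)) by (field; lra).
  replace (c/d) with ((c*b) * / (b*d)) by (field; lra).
  apply Rmult_le_compat_r; [left; apply Rinv_0_lt_compat; nra| exact H].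
Qed.

Lemma cand_pos phi lam (h : Z -> Z) t0 : 1 < lam -> admissible_phi phi ->
  (- 2 <= t0 <= 2)%Z -> Rabs (IZR (h t0)) < lam ->
  0 < sumZ (candidates lam) (fun t => wh phi lam (h t)).
Proof.
  intros Hl Hp Ht Hh.
  apply Rlt_le_trans with (wh phi lam (h t0)).
  - apply wh_pos; auto.
  - apply (sumZ_in _ (fun t => wh phi lam (h t))).
    + destruct (NN_facts lam Hl) as [H2 _]. apply in_cand. lia.
    + intros; apply wh_nonneg; auto.
Qed.

Definition monoZ (f : Z -> R) := forall j1 j2 : Z, (j1 <= j2)%Z -> f j1 <= f j2.

Lemma S_step phi lam f : 1 < lam -> admissible_phi phi -> monoZ f ->
  forall n, S1w phi lam f n <= S1w phi lam f (n+1).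
Proof.
  intros Hl Hp Hf n.
  assert (Hfj : forall j, forall t t', (t' <= t)%Z -> (fun t => f (j+t)%Z) t' <= (fun t => f (j+t)%Z) t)
    by (intros j t t' H; apply Hf; lia).
  assert (R0 : Rabs (IZR 0) < lam) by (rewrite Rabs_R0; lra).
  assert (R1 : Rabs (IZR 1) < lam) by (rewrite Rabs_R1; lra).
  destruct (Z.eq_dec (n mod 2) 0) as [E|E].
  - set (j := (n / 2)%Z). replace n with (2*j)%Z by (unfold j; zl).
    rewrite S_even, S_odd by assumption.
    apply div_cmp.
    + apply (cand_pos phi lam (fun t => 2*t)%Z 0); auto. lia.
    + apply (cand_pos phi lam (fun t => 2*t-1)%Z 1); auto. lia.
    + pose proof (GC (candidates lam) (fun t => wh phi lam (2*t)) (fun t => wh phi lam (2*t-1)) _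
         ltac:(intros t t' Ht; pose proof (wh_LC phi lam (2*t) (2*t'-1) Hl Hp ltac:(lia)) as HH;
               replace (2*t'-1+1)%Z with (2*t')%Z in HH by ring; exact HH) (Hfj j)) as G.
      cbv beta in G. exact G.
  - set (j := (n / 2)%Z). replace n with (2*j+1)%Z by (unfold j; zl).
    replace (2*j+1+1)%Z with (2*j+2)%Z by ring.
    rewrite S_odd, S_even2 by assumption.
    apply div_cmp.
    + apply (cand_pos phi lam (fun t => 2*t-1)%Z 1); auto. lia.
    + apply (cand_pos phi lam (fun t => 2*t-2)%Z 1); auto. lia.
    + pose proof (GC (candidates lam) (fun t => wh phi lam (2*t-1)) (fun t => wh phi lam (2*t-2)) _
         ltac:(intros t t' Ht; pose proof (wh_LC phi lam (2*t-1) (2*t'-2) Hl Hp ltac:(lia)) as HH;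
               replace (2*t'-2+1)%Z with (2*t'-1)%Z in HH by ring;
               replace (2*t-1-1)%Z with (2*t-2)%Z in HH by ring; exact HH) (Hfj j)) as G.
      cbv beta in G. exact G.
Qed.

Lemma mono_of_step (g : Z -> R) : (forall n, g n <= g (n+1)%Z) -> monoZ g.
Proof.
  intros H j1 j2 Hj. replace j2 with (j1 + Z.of_nat (Z.to_nat (j2-j1)))%Z by lia.
  induction (Z.to_nat (j2 - j1)) as [|k IH].
  - rewrite Z.add_0_r. lra.
  - rewrite Nat2Z.inj_succ, Z.add_succ_r. unfold Z.succ. specialize (H (j1 + Z.of_nat k)%Z). lra.
Qed.

Lemma mono_iter phi lam f : 1 < lam -> admissible_phi phi -> monoZ f ->
  forall k, monoZ (S1w_iter phi lam k f).
Proof.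
  intros Hl Hp Hf k. induction k as [|k IH]; [exact Hf|].
  apply mono_of_step. intro n. apply (S_step phi lam _ Hl Hp IH).
Qed.

Lemma cont_at F x e : continuity_pt F x -> 0 < e ->
  exists eta, 0 < eta /\ forall z, Rabs (z - x) < eta -> Rabs (F z - F x) < e.
Proof.
  intros Hc He. unfold continuity_pt, continue_in, limit1_in, limit_in in Hc. simpl in Hc.
  destruct (Hc e He) as [alp [Ha Hz]]. exists alp. split; [exact Ha|].
  intros z Hzx. destruct (Req_dec z x) as [->|Hne].
  - unfold Rminus. rewrite Rplus_opp_r, Rabs_R0. exact He.
  - apply (Hz z). split; [split; [exact I| auto]| exact Hzx].
Qed.

Lemma INR_lt_pow2 n : INR n < 2 ^ n.
Proof.
  induction n as [|n IH]; [simpl; lra|].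
  rewrite S_INR. change (2 ^ S n) with (2 * 2 ^ n). assert (1 <= 2 ^ n) by (apply pow_R1_Rle; lra). lra.
Qed.

Lemma abs_lt_e a e : Rabs a < e -> - e < a < e.
Proof. unfold Rabs; destruct Rcase_abs; intros; split; lra. Qed.
Lemma abs_le_e a e : Rabs a <= e -> - e <= a <= e.
Proof. unfold Rabs; destruct Rcase_abs; intros; split; lra. Qed.

Lemma grid_approx x P eta : 0 < P -> / P < eta ->
  Rabs (IZR (up (x * P) - 1) / P - x) < eta /\
  IZR (up (x * P) - 1) <= x * P /\ x * P - 1 < IZR (up (x * P) - 1).
Proof.
  intros HP He. destruct (archimed (x * P)) as [A B].
  rewrite minus_IZR.
  assert (C: IZR (up (x*P)) - 1 <= x * P) by lra.
  split; [|split; lra].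
  replace ((IZR (up (x * P)) - 1) / P - x) with ((IZR (up (x * P)) - 1 - x * P) * / P) by (field; lra).
  rewrite Rabs_mult, Rabs_inv, (Rabs_right P) by lra.
  assert (Rabs (IZR (up (x * P)) - 1 - x * P) < 1) by (unfold Rabs; destruct Rcase_abs; lra).
  assert (0 < / P) by (apply Rinv_0_lt_compat; lra).
  nra.
Qed.

Theorem corollary4p7 (lam : R) (phi : R -> R) :
  1 < lam -> (forall n : nat, INR n <> lam) ->
  admissible_phi phi ->
  forall (f0 : Z -> R),
    (exists B, forall j, Rabs (f0 j) <= B) ->
    (forall j1 j2 : Z, (j1 <= j2)%Z -> f0 j1 <= f0 j2) ->
    forall F : R -> R, is_limit_function phi lam f0 F ->
    forall x y : R, x <= y -> F x <= F y.
Proof.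
  intros Hl _ Hp f0 _ Hmono F [Hc Hlim] x y Hxy.
  destruct (Rle_lt_dec (F x) (F y)) as [Hle|Hlt]; [exact Hle|exfalso].
  set (e := (F x - F y) / 5).
  assert (He : 0 < e) by (unfold e; lra).
  destruct (cont_at F x e (Hc x) He) as [ex [Hex Cx]].
  destruct (cont_at F y e (Hc y) He) as [ey [Hey Cy]].
  destruct (Hlim e He) as [K HK].
  destruct (archimed_cor1 (Rmin ex ey) ltac:(apply Rmin_glb_lt; lra)) as [N0 [HN0 HN0p]].
  set (k := (K + N0)%nat).
  assert (HP : 0 < 2 ^ k) by (apply pow_lt; lra).
  assert (HinvP : / 2 ^ k < Rmin ex ey).
  { apply Rle_lt_trans with (/ INR N0); [|exact HN0].
    destruct N0 as [|N1]; [lia|].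
    apply Rinv_le_contravar; [apply lt_0_INR; lia|].
    apply Rle_trans with (2 ^ (S N1)); [left; apply INR_lt_pow2| apply Rle_pow; [lra| unfold k; lia]]. }
  assert (Hmx : / 2 ^ k < ex) by (pose proof (Rmin_l ex ey); lra).
  assert (Hmy : / 2 ^ k < ey) by (pose proof (Rmin_r ex ey); lra).
  destruct (grid_approx x (2^k) ex HP Hmx) as [Ax [Bx Cx']].
  destruct (grid_approx y (2^k) ey HP Hmy) as [Ay [By Cy']].
  set (j1 := (up (x * 2 ^ k) - 1)%Z) in *.
  set (j2 := (up (y * 2 ^ k) - 1)%Z) in *.
  assert (Hj : (j1 <= j2)%Z).
  { assert (x * 2^k <= y * 2^k) by (apply Rmult_le_compat_r; lra).
    assert (IZR j1 < IZR (j2 + 1)) by (rewrite plus_IZR; lra).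
    apply lt_IZR in H0. lia. }
  assert (M := mono_iter phi lam f0 Hl Hp Hmono k j1 j2 Hj).
  assert (Hk : (K <= k)%nat) by (unfold k; lia).
  pose proof (abs_le_e _ _ (HK k Hk j1)). pose proof (abs_le_e _ _ (HK k Hk j2)).
  pose proof (abs_lt_e _ _ (Cx _ Ax)). pose proof (abs_lt_e _ _ (Cy _ Ay)).
  unfold e in *. lra.
Qed.
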